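(* Let $C=\{x_0(x_1+x_2)+(x_1-x_2)^2=0\}\subset\mathbb{P}^2$. Then: $C$ is strongly concise; $(0:1:1)$ is the only point of $\{x_0=0\}$ with $\operatorname{Hrk}_C=1$; every point $(0:s:t)$ with $(s:t)\notin\{(1:1),(1:-1)\}$ has $\operatorname{Hrk}_C=2$; and the point $(0:1:-1)$ has $\operatorname{Hrk}_C((0:1:-1))=3$ while $\underline{\operatorname{Hrk}}_C((0:1:-1))=2$ (as $C^{\star2}=\mathbb{P}^2$).
   Context: Coordinates $x_0,x_1,x_2$ on $\mathbb{P}^2$, $H_i=\{x_i=0\}$. Hadamard product: $(p_0:p_1:p_2)\star(q_0:q_1:q_2)=(p_0q_0:p_1q_1:p_2q_2)$, defined when not all $p_iq_i$ vanish. $\operatorname{Hrk}_C(q)=\min\{m\mid q=p_1\star\cdots\star p_m,\ p_i\in C\}$. $C\star C$ is the Zariski closure of all defined products of two points of $C$, $C^{\star2}=C\star C$. Border rank $\underline{\operatorname{Hrk}}_C(p)=\min\{m\mid p\in C^{\star m}\}$ where $C^{\star1}=C$. $C$ is strongly concise if for every $i$, $(C\cap H_i)\not\subset\bigcup_{j\ne i}H_j$. *)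

(* Defs.v *)
From HB Require Import structures.
From mathcomp Require Import all_boot all_order all_algebra.
From mathcomp Require Import mpoly.
Set Implicit Arguments. Unset Strict Implicit. Unset Printing Implicit Defensive.
Import GRing.Theory.
Local Open Scope ring_scope.

(* Points of P^2 over K are represented by nonzero vectors v : 'I_3 -> K
   (homogeneous coordinates x_0, x_1, x_2); subsets of P^2 by predicates on
   such representatives that are invariant under nonzero scaling. *)
Definition vec3 (K : fieldType) := 'I_3 -> K.

Definition pt (K : fieldType) (a b c : K) : vec3 K :=
  fun i => if nat_of_ord i == 0%N then a else if nat_of_ord i == 1%N then b else c.

Definition nonzero (K : fieldType) (v : vec3 K) : Prop := exists i, v i != 0.

Definition proj_eq (K : fieldType) (v w : vec3 K) : Prop :=
  nonzero v /\ exists c : K, c != 0 /\ forall i, w i = c * v i.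

Definition hadamard (K : fieldType) (v w : vec3 K) : vec3 K := fun i => v i * w i.
Definition hprod (K : fieldType) (m : nat) (ps : 'I_m -> vec3 K) : vec3 K :=
  fun i => \prod_(j < m) ps j i.

Definition curveC (K : fieldType) (v : vec3 K) : Prop :=
  nonzero v /\ v ord0 * (v (inord 1) + v (inord 2)) + (v (inord 1) - v (inord 2)) ^+ 2 = 0.

(* q is the (defined) Hadamard product of m points of S; q nonzero
   forces the product to be defined *)
Definition hprod_of (K : fieldType) (S : vec3 K -> Prop) (m : nat) (q : vec3 K) : Prop :=
  exists ps : 'I_m -> vec3 K, (forall j, S (ps j)) /\ proj_eq (hprod ps) q.

Definition Hrk_is (K : fieldType) (S : vec3 K -> Prop) (q : vec3 K) (m : nat) : Prop :=
  (0 < m)%N /\ hprod_of S m q /\ forall k, (0 < k)%N -> (k < m)%N -> ~ hprod_of S k q.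

Definition zclosure (K : fieldType) (S : vec3 K -> Prop) (v : vec3 K) : Prop :=
  nonzero v /\ forall f : {mpoly K[3]}, (forall w, S w -> f.@[w] = 0) -> f.@[v] = 0.

Definition hpow (K : fieldType) (S : vec3 K -> Prop) (m : nat) : vec3 K -> Prop :=
  if m == 1%N then S else zclosure (fun v => nonzero v /\ hprod_of S m v).

Definition bHrk_is (K : fieldType) (S : vec3 K -> Prop) (q : vec3 K) (m : nat) : Prop :=
  (0 < m)%N /\ hpow S m q /\ forall k, (0 < k)%N -> (k < m)%N -> ~ hpow S k q.

Definition strongly_concise (K : fieldType) (S : vec3 K -> Prop) : Prop :=
  forall i : 'I_3, exists v, S v /\ v i = 0 /\ forall j, j != i -> v j != 0.

(* Main.v *)
Require Import Defs.
From HB Require Import structures.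
From mathcomp Require Import all_boot all_order all_algebra.
From mathcomp Require Import mpoly.
From mathcomp Require Import ring.
Import GRing.Theory.
Local Open Scope ring_scope.
Set Implicit Arguments. Unset Strict Implicit.

Lemma I3_cases (i : 'I_3) : i = ord0 \/ i = inord 1 \/ i = inord 2.
Proof.
case: i => [[|[|[|n]]] Hi].
- by left; apply: val_inj.
- by right; left; apply: val_inj; rewrite /= inordK.
- by right; right; apply: val_inj; rewrite /= inordK.
- by [].
Qed.

Lemma pt0 (K : fieldType) (a b c : K) : pt a b c ord0 = a.
Proof. by []. Qed.
Lemma pt1 (K : fieldType) (a b c : K) : pt a b c (inord 1) = b.
Proof. by rewrite /pt inordK. Qed.
Lemma pt2 (K : fieldType) (a b c : K) : pt a b c (inord 2) = c.
Proof. by rewrite /pt inordK. Qed.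

Lemma natr_neq0 (K : fieldType) (hchar : [pchar K] =i pred0) n :
  n != 0%N -> n%:R != 0 :> K.
Proof. by move/pcharf0P: hchar => ->. Qed.

Lemma ex_sqrt (K : closedFieldType) (z : K) : exists y, y ^+ 2 = z.
Proof.
have [y Hy] := @solve_monicpoly K 2 (nth 0 [:: z]) isT.
by exists y; rewrite Hy !big_ord_recl big_ord0 /= mul0r mulr1 !addr0.
Qed.

Ltac fld := field; repeat (apply/andP; split); try assumption.

Lemma natr_inj (K : fieldType) (hchar : [pchar K] =i pred0) :
  injective (fun n : nat => n%:R : K).
Proof.
move=> i j /= E.
wlog le : i j E / (i <= j)%N.
  move=> H; case/orP: (leq_total i j) => h; first exact: H.
  by symmetry; apply: H.
have : (j - i)%:R == 0 :> K by rewrite natrB // E subrr.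
move/pcharf0P: hchar => ->; rewrite subn_eq0 => ji.
by apply/eqP; rewrite eqn_leq le ji.
Qed.

Lemma line (K : fieldType) (hchar : [pchar K] =i pred0) (f : {mpoly K[3]}) (v : vec3 K) :
  (forall x, v ord0 + x != 0 -> f.@[fun i => v i + (if i == ord0 then x else 0)] = 0) ->
  f.@[v] = 0.
Proof.
move=> H.
pose h i : {poly K} := (v i)%:P + (if i == ord0 then 'X else 0).
pose g : {poly K} := \sum_(m <- msupp f) f@_m *: \prod_(i < 3) h i ^+ m i.
have hg : forall x, g.[x] = f.@[fun i => v i + (if i == ord0 then x else 0)].
  move=> x; rewrite mevalE /g horner_sum; apply: eq_bigr => m _.
  rewrite hornerZ horner_prod; congr (_ * _); apply: eq_bigr => i _.
  rewrite horner_exp /h hornerD hornerC.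
  by case: (i == ord0); rewrite ?hornerX ?horner0.
pose G := g * ('X + (v ord0)%:P).
have hG : forall x, G.[x] = 0.
  move=> x; rewrite hornerM hornerD hornerX hornerC.
  have [hx|hx] := eqVneq (x + v ord0) 0; first by rewrite hx mulr0.
  by rewrite hg H ?mul0r // addrC.
have G0 : G = 0.
  apply: (@roots_geq_poly_eq0 _ _ [seq i%:R | i <- iota 0 (size G)]).
  - by apply/allP => x /mapP [i _ ->]; rewrite /root hG.
  - by rewrite map_inj_uniq ?iota_uniq //; apply: natr_inj.
  - by rewrite size_map size_iota.
have g0 : g = 0.
  move/eqP: G0; rewrite mulf_eq0 => /orP [/eqP //|].
  by rewrite -size_poly_eq0 size_XaddC.
transitivity f.@[fun i => v i + (if i == ord0 then 0 else 0)].
  by apply: meval_eq => i /=; case: ifP; rewrite addr0.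
by rewrite -hg g0 horner0.
Qed.

Lemma hprod2 (K : fieldType) (p q : vec3 K) i :
  hprod (fun j : 'I_2 => if val j == 0%N then p else q) i = p i * q i.
Proof. by rewrite /hprod !big_ord_recl big_ord0 mulr1. Qed.

Lemma curve_par (K : fieldType) (hchar : [pchar K] =i pred0) (x : K) :
  curveC (pt (-2) (x*(x+1)) (x*(x-1))).
Proof.
split; last by rewrite pt0 pt1 pt2; ring.
by exists ord0; rewrite pt0 oppr_eq0 natr_neq0.
Qed.

Lemma img_pt (K : closedFieldType) (hchar : [pchar K] =i pred0) (a b c : K) :
  a != 0 -> hprod_of (@curveC K) 2 (pt a b c).
Proof.
move=> ha.
have h2 : 2 != 0 :> K by rewrite natr_neq0.
have h4 : 4 != 0 :> K by rewrite natr_neq0.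
pose B := 4 * b / a; pose C := 4 * c / a; pose D := B + C.
have [y hy] := @ex_sqrt _ (1 + 2 * D).
have [P [hP0 hPD]] : exists P : K, P != 0 /\ 2 * P * (P + 1) = D.
  have [hy1|hy1] := eqVneq y 1.
    exists (-1); split; first by rewrite oppr_eq0 oner_eq0.
    transitivity ((y^+2 - 1)/2); first by rewrite hy1; fld.
    by rewrite hy; fld.
  exists ((-1 + y)/2); split.
    by rewrite mulf_neq0 ?invr_eq0 // addrC subr_eq0.
  transitivity ((y^+2 - 1)/2); first by fld.
  by rewrite hy; fld.
pose S := (B - C) / (2 * P).
have [z hz] := @ex_sqrt _ (S^+2 - 4 * P).
pose t := (S + z)/2; pose u := (S - z)/2.
have htu : t * u = P.
  transitivity ((S^+2 - (S^+2 - 4 * P))/4); first by rewrite -hz /t /u; fld.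
  by fld.
have hts : t + u = S by rewrite /t /u; fld.
have h2PS : 2 * P * S = B - C by rewrite /S; fld.
have hB : t*u*((t+1)*(u+1)) = B.
  have -> : (t+1)*(u+1) = t*u + (t+u) + 1 by ring.
  rewrite htu hts.
  transitivity ((2*P*(P+1) + 2*P*S)/2); first by fld.
  by rewrite hPD h2PS /D; fld.
have hC : t*u*((t-1)*(u-1)) = C.
  have -> : (t-1)*(u-1) = t*u - (t+u) + 1 by ring.
  rewrite htu hts.
  transitivity ((2*P*(P+1) - 2*P*S)/2); first by fld.
  by rewrite hPD h2PS /D; fld.
exists (fun j : 'I_2 => if val j == 0%N then pt (-2) (t*(t+1)) (t*(t-1))
                         else pt (-2) (u*(u+1)) (u*(u-1))).
split; first by move=> j; case: ifP => _; apply: curve_par.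
split.
  by exists ord0; rewrite hprod2 !pt0 mulf_neq0 // oppr_eq0.
exists (a / 4); split; first by rewrite mulf_neq0 ?invr_eq0.
move=> i; rewrite hprod2.
case: (I3_cases i) => [->|[->|->]]; rewrite ?pt0 ?pt1 ?pt2.
- by fld.
- have -> : t * (t + 1) * (u * (u + 1)) = t*u*((t+1)*(u+1)) by ring.
  by rewrite hB /B; fld.
- have -> : t * (t - 1) * (u * (u - 1)) = t*u*((t-1)*(u-1)) by ring.
  by rewrite hC /C; fld.
Qed.

Lemma I3_ind (P : 'I_3 -> Prop) : P ord0 -> P (inord 1) -> P (inord 2) -> forall i, P i.
Proof. by move=> h0 h1 h2 i; case: (I3_cases i) => [->|[->|->]]. Qed.

Lemma nonzero_ext (K : fieldType) (u u' : vec3 K) :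
  nonzero u -> (forall i, u i = u' i) -> nonzero u'.
Proof. by case=> i hi E; exists i; rewrite -E. Qed.

Lemma proj_eq_extl (K : fieldType) (u u' w : vec3 K) :
  proj_eq u w -> (forall i, u i = u' i) -> proj_eq u' w.
Proof.
case=> nz [c [hc E]] E'; split; first exact: nonzero_ext nz E'.
by exists c; split => // i; rewrite E E'.
Qed.

Lemma proj_eq_extr (K : fieldType) (u w w' : vec3 K) :
  proj_eq u w -> (forall i, w i = w' i) -> proj_eq u w'.
Proof.
case=> nz [c [hc E]] E'; split => //.
by exists c; split => // i; rewrite -E'.
Qed.

Lemma proj_eq_sym (K : fieldType) (v w : vec3 K) : proj_eq v w -> proj_eq w v.
Proof.
case=> [[i hi] [c [hc E]]]; split.
  by exists i; rewrite E mulf_neq0.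
exists c^-1; split; first by rewrite invr_eq0.
by move=> j; rewrite E mulrA mulVf // mul1r.
Qed.

Lemma proj_eq_refl (K : fieldType) (v : vec3 K) : nonzero v -> proj_eq v v.
Proof. by move=> nz; split => //; exists 1; split; [exact: oner_neq0|move=> i; rewrite mul1r]. Qed.

Lemma hprod_of_ext (K : fieldType) S m (u u' : vec3 K) :
  hprod_of S m u -> (forall i, u i = u' i) -> hprod_of S m u'.
Proof.
case=> ps [Hs PE] E; exists ps; split => //; exact: proj_eq_extr PE E.
Qed.

Lemma img (K : closedFieldType) (hchar : [pchar K] =i pred0) (w : vec3 K) :
  w ord0 != 0 -> hprod_of (@curveC K) 2 w.
Proof.
move=> hw; apply: (hprod_of_ext (img_pt hchar (w (inord 1)) (w (inord 2)) hw)).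
by apply: I3_ind; rewrite ?pt0 ?pt1 ?pt2.
Qed.

Lemma part6 (K : closedFieldType) (hchar : [pchar K] =i pred0) (v : vec3 K) :
  nonzero v -> hpow (@curveC K) 2 v.
Proof.
move=> nz; rewrite /hpow /=; split => // f Hf.
apply: (line hchar) => x hx; apply: Hf; split.
  by exists ord0; rewrite eqxx.
by apply: (img hchar); rewrite eqxx.
Qed.

Lemma rank1_x0 (K : fieldType) (v : vec3 K) :
  v ord0 = 0 -> hprod_of (@curveC K) 1 v -> proj_eq v (pt 0 1 1).
Proof.
move=> v0 [ps [Cps PE]].
have PE' : proj_eq (ps ord0) v.
  by apply: (proj_eq_extl PE) => i; rewrite /hprod big_ord1.
case: PE' => _ [c [hc E]].
case: (Cps ord0) => nzp Cp.
have p0 : ps ord0 ord0 = 0.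
  by move: (E ord0); rewrite v0 => /esym/eqP; rewrite mulf_eq0 (negbTE hc) => /eqP.
move: Cp; rewrite p0 mul0r add0r => /eqP; rewrite expf_eq0 /= subr_eq0 => /eqP p12.
have p1 : ps ord0 (inord 1) != 0.
  case: nzp => i; case: (I3_cases i) => [->|[->|->]] //; first by rewrite p0 eqxx.
  by rewrite p12.
split.
  by exists (inord 1); rewrite E mulf_neq0.
exists (c * ps ord0 (inord 1))^-1; split; first by rewrite invr_eq0 mulf_neq0.
apply: I3_ind; rewrite ?pt0 ?pt1 ?pt2 E.
- by rewrite p0 !mulr0.
- by rewrite mulVf // mulf_neq0.
- by rewrite -p12 mulVf // mulf_neq0.
Qed.

Lemma key (K : fieldType) (hchar : [pchar K] =i pred0) (p q : vec3 K) :
  curveC p -> curveC q -> p ord0 = 0 ->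
  p (inord 1) * q (inord 1) = - (p (inord 2) * q (inord 2)) ->
  p (inord 1) * q (inord 1) != 0 -> False.
Proof.
move=> [_ Cp] [_ Cq] p0 E nz.
move: Cp; rewrite p0 mul0r add0r => /eqP; rewrite expf_eq0 /= subr_eq0 => /eqP p12.
have p1 : p (inord 1) != 0 by move: nz; rewrite mulf_eq0 negb_or => /andP[].
have hq1 : q (inord 1) = - q (inord 2).
  by apply: (mulfI p1); rewrite E p12 mulrN.
have : 4 * q (inord 2) ^+ 2 = 0.
  by rewrite -[RHS]Cq hq1; ring.
move/eqP; rewrite mulf_eq0 (negbTE (natr_neq0 hchar _)) //= expf_eq0 /= => /eqP q2.
by move: nz; rewrite hq1 q2 oppr0 mulr0 eqxx.
Qed.

Lemma no_rank2 (K : fieldType) (hchar : [pchar K] =i pred0) :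
  ~ hprod_of (@curveC K) 2 (pt 0 1 (-1)).
Proof.
case=> ps [Cps [_ [c [hc E]]]].
have E' : forall i, pt 0 1 (-1) i = c * (ps ord0 i * ps (lift ord0 ord0) i).
  by move=> i; rewrite E /hprod !big_ord_recl big_ord0 mulr1.
have E0 := E' ord0; have E1 := E' (inord 1); have E2 := E' (inord 2).
rewrite pt0 in E0; rewrite pt1 in E1; rewrite pt2 in E2.
set p := ps ord0 in E0 E1 E2; set q := ps (lift ord0 ord0) in E0 E1 E2.
have Cp : curveC p by apply: Cps.
have Cq : curveC q by apply: Cps.
have nz : p (inord 1) * q (inord 1) != 0.
  by apply/eqP => h; move: E1; rewrite h mulr0 => /eqP; rewrite oner_eq0.
have S : p (inord 1) * q (inord 1) = - (p (inord 2) * q (inord 2)).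
  apply: (mulfI hc); rewrite mulrN -E1 -E2 opprK //.
move: E0 => /esym/eqP; rewrite !mulf_eq0 (negbTE hc) /= => /orP [/eqP p0|/eqP q0].
  exact: (key hchar Cp Cq p0 S nz).
apply: (key hchar Cq Cp q0); first by rewrite mulrC S mulrC.
by rewrite mulrC.
Qed.

Lemma hprod3 (K : fieldType) (a b c : vec3 K) i :
  hprod (fun j : 'I_3 => if val j == 0%N then a else if val j == 1%N then b else c) i
  = a i * b i * c i.
Proof. by rewrite /hprod !big_ord_recl big_ord0 mulr1 mulrA. Qed.

Unset Implicit Arguments.

Theorem mainTheorem13 (K : closedFieldType) (hchar : [pchar K] =i pred0) :
  strongly_concise (@curveC K)
  /\ (forall v : vec3 K, nonzero v -> v ord0 = 0 ->
        (Hrk_is (@curveC K) v 1 <-> proj_eq v (pt 0 1 1)))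
  /\ (forall s t : K, nonzero (pt 0 s t) ->
        ~ proj_eq (pt 0 s t) (pt 0 1 1) -> ~ proj_eq (pt 0 s t) (pt 0 1 (-1)) ->
        Hrk_is (@curveC K) (pt 0 s t) 2)
  /\ Hrk_is (@curveC K) (pt 0 1 (-1)) 3
  /\ bHrk_is (@curveC K) (pt 0 1 (-1)) 2
  /\ (forall v : vec3 K, nonzero v -> hpow (@curveC K) 2 v).
Proof.
have h2 : 2 != 0 :> K by rewrite natr_neq0.
have C011 : curveC (pt 0 1 1 : vec3 K).
  split; last by rewrite pt0 pt1 pt2; ring.
  by exists (inord 1); rewrite pt1 oner_neq0.
split.
  apply: I3_ind.
  - exists (pt 0 1 1); split => //; split; first by rewrite pt0.
    apply: I3_ind; rewrite ?eqxx // ?pt1 ?pt2 ?oner_neq0 //.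
  - exists (pt (-1) 0 1); split.
      split; last by rewrite pt0 pt1 pt2; ring.
      by exists ord0; rewrite pt0 oppr_eq0 oner_neq0.
    split; first by rewrite pt1.
    apply: I3_ind; rewrite ?eqxx // ?pt0 ?pt2 ?oppr_eq0 ?oner_neq0 //.
  - exists (pt (-1) 1 0); split.
      split; last by rewrite pt0 pt1 pt2; ring.
      by exists ord0; rewrite pt0 oppr_eq0 oner_neq0.
    split; first by rewrite pt2.
    apply: I3_ind; rewrite ?eqxx // ?pt0 ?pt1 ?oppr_eq0 ?oner_neq0 //.
split.
  move=> v nz v0; split.
    by case=> _ [H _]; exact: rank1_x0 v0 H.
  move=> PE; split => //; split; last by case=> [|[]].
  exists (fun _ => pt 0 1 1); split => //.
  apply: proj_eq_extl (proj_eq_sym PE) _.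
  by move=> i; rewrite /hprod big_ord1.
split.
  move=> s t nz N1 N2.
  have hst : s + t != 0.
    apply/eqP => hst.
    have ht : t = - s by apply/eqP; rewrite -addr_eq0 addrC hst.
    have hs : s != 0.
      case: nz => i; case: (I3_cases i) => [->|[->|->]];
        rewrite ?pt0 ?pt1 ?pt2 ?eqxx // ht oppr_eq0 //.
    apply: N2; split => //; exists s^-1; split; first by rewrite invr_eq0.
    apply: I3_ind; rewrite ?pt0 ?pt1 ?pt2 ?mulr0 ?mulVf // ht mulrN mulVf //.
  split => //; split.
    exists (fun j : 'I_2 => if val j == 0%N then pt 0 1 1
                            else pt (- (s - t) ^+ 2 / (s + t)) s t).
    split.
      move=> j; case: ifP => _ //; split.
        case: nz => i; case: (I3_cases i) => [->|[->|->]]; rewrite ?pt0 ?eqxx // => h.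
          by exists (inord 1); rewrite pt1; rewrite pt1 in h.
        by exists (inord 2); rewrite pt2; rewrite pt2 in h.
      rewrite pt0 pt1 pt2; field; exact: hst.
    apply: proj_eq_extl (proj_eq_refl nz) _.
    by apply: I3_ind => /=; rewrite hprod2 ?pt0 ?pt1 ?pt2 ?mul0r ?mul1r.
  move=> k k0 k1; have -> : k = 1%N by case: k k0 k1 => [|[|]].
  by move/(rank1_x0 (pt0 0 s t)).
have nz1 : nonzero (pt 0 1 (-1) : vec3 K) by exists (inord 1); rewrite pt1 oner_neq0.
have notC : ~ curveC (pt 0 1 (-1) : vec3 K).
  case=> _; rewrite pt0 pt1 pt2 => /eqP.
  have -> : 0 * (1 + -1) + (1 - -1) ^+ 2 = 4 :> K by ring.
  by rewrite (negbTE (natr_neq0 hchar (n:=4) isT)).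
have not1 : ~ hprod_of (@curveC K) 1 (pt 0 1 (-1)).
  move/(rank1_x0 (pt0 0 1 (-1))) => [_ [c [hc E]]].
  have E1 := E (inord 1); have E2 := E (inord 2).
  rewrite !pt1 in E1; rewrite !pt2 in E2.
  rewrite mulr1 in E1; rewrite -E1 in E2.
  have : (2 : K) = 0.
    transitivity (1 + 1 : K); first by ring.
    by rewrite {1}E2 mulrN1 addNr.
  by move/eqP; rewrite (negbTE h2).
split.
  split => //; split.
    exists (fun j : 'I_3 => if val j == 0%N then pt 0 1 1
       else if val j == 1%N then pt (-1) 3 6 else pt (-9) 2 (-1)).
    split.
      move=> j; case: ifP => _ //; case: ifP => _; split.
      - by exists (inord 1); rewrite pt1 natr_neq0.
      - by rewrite pt0 pt1 pt2; ring.
      - by exists (inord 1); rewrite pt1 natr_neq0.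
      - by rewrite pt0 pt1 pt2; ring.
    split.
      exists (inord 1); rewrite hprod3 !pt1.
      by rewrite (_ : 1 * 3 * 2 = 6 :> K) ?natr_neq0 //; ring.
    have h6 : 6 != 0 :> K by rewrite natr_neq0.
    exists 6^-1; split; first by rewrite invr_eq0.
    apply: I3_ind; rewrite hprod3 ?pt0 ?pt1 ?pt2; fld.
  move=> k k0 k1; case: k k0 k1 => [|[|[|]]] // _ _.
    exact: no_rank2 hchar.
split.
  split => //; split; first exact: part6.
  move=> k k0 k1; case: k k0 k1 => [|[|]] // _ _.
by move=> v; apply: part6.
Qed.
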